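(* Let $\varphi:\mathbb{R}^d\to\mathbb{R}^p$ be any feature map and $z_1,\dots,z_N\in\mathbb{R}^d$ training inputs with labels $G=(g_1,\dots,g_N)\in\mathbb{R}^N$, such that the kernel $K=\Phi\Phi^\top\in\mathbb{R}^{N\times N}$ is invertible, where $\Phi\in\mathbb{R}^{N\times p}$ has $i$-th row $\varphi(z_i)^\top$. Let $\Phi_{-1}\in\mathbb{R}^{(N-1)\times p}$ be $\Phi$ with its first row removed, $P_{\Phi_{-1}}$ the orthogonal projector onto the span of the rows of $\Phi_{-1}$, and $P^\perp_{\Phi_{-1}}=I-P_{\Phi_{-1}}$. Then $\|P^\perp_{\Phi_{-1}}\varphi(z_1)\|_2\neq 0$, and for every $z\in\mathbb{R}^d$, $$\mathcal S_{z_1}(z)=\mathcal F_\varphi(z,z_1)\,\mathcal S_{z_1}(z_1),\qquad\text{where }\ \mathcal F_\varphi(z,z_1):=\frac{\varphi(z)^\top P^\perp_{\Phi_{-1}}\varphi(z_1)}{\|P^\perp_{\Phi_{-1}}\varphi(z_1)\|_2^2}.$$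
   Context: Model: $f(z,\theta)=\varphi(z)^\top\theta$, $\theta\in\mathbb{R}^p$. Given an initialization $\theta_0\in\mathbb{R}^p$, the trained parameters are $\theta^*=\theta_0+\Phi^+(G-\Phi\theta_0)$ with $\Phi^+=\Phi^\top K^{-1}$ (the Moore–Penrose inverse). With $Z_{-1},G_{-1}$ the data and labels without the first pair, $\theta^*_{-1}=\theta_0+\Phi_{-1}^+(G_{-1}-\Phi_{-1}\theta_0)$, where $\Phi_{-1}^+=\Phi_{-1}^\top(\Phi_{-1}\Phi_{-1}^\top)^{-1}$. The stability with respect to $z_1$ is the function $\mathcal S_{z_1}(z):=f(z,\theta^* )-f(z,\theta^*_{-1})$. *)

(* Defs.v *)
From mathcomp Require Import all_boot all_order all_algebra.
From mathcomp Require Import reals.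
Set Implicit Arguments. Unset Strict Implicit. Unset Printing Implicit Defensive.
Import Order.TTheory GRing.Theory Num.Theory.
Local Open Scope ring_scope.

Section Defs.
Variables (R : realType) (d p : nat).

Definition feat_mx (m : nat) (phi : 'rV[R]_d -> 'cV[R]_p) (Z : 'I_m -> 'rV[R]_d)
  : 'M[R]_(m, p) := \matrix_(i, j) phi (Z i) j 0.

(* Moore-Penrose inverse of a full-row-rank matrix: A^T (A A^T)^{-1}. *)
Definition pinv_rows (m : nat) (A : 'M[R]_(m, p)) : 'M[R]_(p, m) :=
  A^T *m invmx (A *m A^T).

Definition trained (m : nat) (A : 'M[R]_(m, p)) (G : 'cV[R]_m) (theta0 : 'cV[R]_p)
  : 'cV[R]_p := theta0 + pinv_rows A *m (G - A *m theta0).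

Definition model (phi : 'rV[R]_d -> 'cV[R]_p) (z : 'rV[R]_d) (theta : 'cV[R]_p) : R :=
  ((phi z)^T *m theta) 0 0.

Definition drop_first (n : nat) (Z : 'I_n.+1 -> 'rV[R]_d) : 'I_n -> 'rV[R]_d :=
  fun i => Z (lift ord0 i).
Definition drop_first_cV (n : nat) (G : 'cV[R]_n.+1) : 'cV[R]_n :=
  \col_i G (lift ord0 i) 0.

(* Stability with respect to z_1 (index ord0). *)
Definition stability (n : nat) (phi : 'rV[R]_d -> 'cV[R]_p)
  (Z : 'I_n.+1 -> 'rV[R]_d) (G : 'cV[R]_n.+1) (theta0 : 'cV[R]_p) (z : 'rV[R]_d) : R :=
  model phi z (trained (feat_mx phi Z) G theta0)
  - model phi z (trained (feat_mx phi (drop_first Z)) (drop_first_cV G) theta0).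

Definition is_orth_proj (m : nat) (P : 'M[R]_p) (A : 'M[R]_(m, p)) : Prop :=
  [/\ P^T = P, P *m P = P & (P == A)%MS].

Definition norm2 (v : 'cV[R]_p) : R := Num.sqrt ((v^T *m v) 0 0).

End Defs.

(* Main.v *)
Require Import Defs.
From mathcomp Require Import all_boot all_order all_algebra.
From mathcomp Require Import reals.
Import Order.TTheory GRing.Theory Num.Theory.
Local Open Scope ring_scope.

Lemma featE (R : realType) (d p n : nat)
  (phi : 'rV[R]_d -> 'cV[R]_p) (Z : 'I_n.+1 -> 'rV[R]_d) :
  feat_mx phi Z = col_mx (phi (Z ord0))^T (feat_mx phi (drop_first Z)).
Proof.
apply/matrixP => i j; rewrite !mxE; case: splitP => k Hk; rewrite !mxE.
  rewrite [k]ord1; congr (phi (Z _) _ _); apply: val_inj => /=; by rewrite Hk [k]ord1.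
rewrite /drop_first; congr (phi (Z _) _ _); apply: val_inj => /=; by rewrite Hk.
Qed.

Lemma dropGE (R : realType) (n : nat) (G : 'cV[R]_n.+1) :
  drop_first_cV G = dsubmx (G : 'M_(1 + n, 1)).
Proof. by apply/matrixP => i j; rewrite !mxE; rewrite [j]ord1; congr (G _ _); apply: val_inj. Qed.

Lemma sqsum (R : realType) k (u : 'rV[R]_k) : (u *m u^T) 0 0 = \sum_j u 0 j ^+ 2.
Proof. by rewrite mxE; apply: eq_bigr => j _; rewrite mxE expr2. Qed.

Lemma sq_eq0 (R : realType) k (u : 'rV[R]_k) : (u *m u^T) 0 0 = 0 -> u = 0.
Proof.
rewrite sqsum => /eqP; rewrite psumr_eq0 => [/allP H|j _]; last exact: sqr_ge0.
apply/matrixP => i j; rewrite [i]ord1 mxE.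
by have := H j (mem_index_enum _); rewrite /= sqrf_eq0 => /eqP.
Qed.

Lemma sq_ge0 (R : realType) k (u : 'rV[R]_k) : 0 <= (u *m u^T) 0 0.
Proof. by rewrite sqsum; apply: sumr_ge0 => j _; exact: sqr_ge0. Qed.

Lemma H3 (R : realType) m q (X : 'M[R]_(m, q)) (y : 'rV[R]_m) :
  X *m X^T \in unitmx -> y *m X = 0 -> y = 0.
Proof. by move=> Hu Hy; rewrite -(mulmxK Hu y) mulmxA Hy !mul0mx. Qed.

Lemma H2 (R : realType) m q (X : 'M[R]_(m, q)) :
  (forall y : 'rV[R]_m, y *m X = 0 -> y = 0) -> X *m X^T \in unitmx.
Proof.
move=> H; rewrite -row_free_unit -kermx_eq0; apply/eqP/row_matrixP => i.
rewrite row0; apply: H; apply: sq_eq0.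
have := congr1 (row i) (mulmx_ker (X *m X^T)); rewrite row0 row_mul => E.
by rewrite trmx_mul !mulmxA -(mulmxA (row i _)) E mul0mx mxE.
Qed.

Lemma H11 (R : realType) (X c : 'M[R]_1) : (X *m c) 0 0 = X 0 0 * c 0 0.
Proof. by rewrite mxE big_ord1. Qed.

Lemma Htr (R : realType) p m (X : 'M[R]_(m, p)) G th :
  X *m X^T \in unitmx -> X *m trained X G th = G.
Proof.
move=> Hu; rewrite /trained /pinv_rows mulmxDr !mulmxA mulmxV // mul1mx.
by rewrite addrC subrK.
Qed.

Lemma decompT (R : realType) p m (a : 'cV[R]_p) (B : 'M[R]_(m, p)) (x : 'cV[R]_(1 + m)) :
  (col_mx a^T B)^T *m x = a *m usubmx x + B^T *m dsubmx x.
Proof. by rewrite tr_col_mx trmxK -{1}(vsubmxK x) mul_row_col. Qed.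

Theorem lemma1 (R : realType) (d p n : nat)
  (phi : 'rV[R]_d -> 'cV[R]_p) (Z : 'I_n.+1 -> 'rV[R]_d) (G : 'cV[R]_n.+1)
  (theta0 : 'cV[R]_p) (P : 'M[R]_p) :
  feat_mx phi Z *m (feat_mx phi Z)^T \in unitmx ->
  is_orth_proj P (feat_mx phi (drop_first Z)) ->
  let Pperp := 1%:M - P in
  let v1 := Pperp *m phi (Z ord0) in
  norm2 v1 != 0 /\
  forall z : 'rV[R]_d,
    stability phi Z G theta0 z
    = (((phi z)^T *m v1) 0 0 / norm2 v1 ^+ 2) * stability phi Z G theta0 (Z ord0).
Proof.
move=> HK [PT PP /andP[PsB BsP]] Pperp v1.
have AE := @featE R d p n phi Z.
set A := feat_mx phi Z in HK AE *.
set a := phi (Z ord0) in AE v1 *.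
set B := feat_mx phi (drop_first Z) in AE PsB BsP *.
case/submxP: PsB => M PM; case/submxP: BsP => N BN.
have BP : B *m P = B by rewrite BN -mulmxA PP.
have PBt : P *m B^T = B^T by rewrite -{1}PT -trmx_mul BP.
have PerpBt : Pperp *m B^T = 0 by rewrite /Pperp mulmxBl mul1mx PBt subrr.
have uB : B *m B^T \in unitmx.
  apply: H2 => y Hy.
  have : row_mx 0 y *m col_mx a^T B = 0 by rewrite mul_row_col mul0mx Hy addr0.
  rewrite -AE => /(@H3 _ _ _ _ _ HK); move=> E; apply/matrixP => i j; have := congr1 (fun X : 'M_(1, 1 + n) => X i (rshift 1 j)) E.
  by rewrite /= row_mxEr !mxE.
have hA := @Htr _ _ _ _ G theta0 HK.
have hB := @Htr _ _ _ _ (drop_first_cV G) theta0 uB.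
set tA := trained A G theta0 in hA *.
set tB := trained B (drop_first_cV G) theta0 in hB *.
have Bd : B *m (tA - tB) = 0.
  rewrite mulmxBr hB dropGE; have := mul_col_mx a^T B tA; rewrite -AE hA => /(congr1 dsubmx).
  by rewrite col_mxKd => ->; rewrite subrr.
have [c [w dE]] : exists (c : 'M_1) (w : 'cV_n), tA - tB = a *m c + B^T *m w.
  pose x := invmx (A *m A^T) *m (G - A *m theta0).
  have -> : tA = theta0 + A^T *m x by rewrite /tA /trained /pinv_rows -mulmxA.
  have := @decompT _ _ _ a B (x : 'M_(1 + n, 1)); rewrite -AE => ->.
  exists (usubmx (x : 'M_(1 + n, 1))).
  exists (dsubmx (x : 'M_(1 + n, 1)) - invmx (B *m B^T) *m (drop_first_cV G - B *m theta0)).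
  rewrite /tB /trained /pinv_rows -(mulmxA B^T).
  by rewrite opprD addrACA subrr add0r (mulmxBr B^T) addrA.
have Pd : P *m (tA - tB) = 0 by rewrite PM -mulmxA Bd mulmx0.
have dv : tA - tB = v1 *m c.
  have E : Pperp *m (tA - tB) = tA - tB by rewrite /Pperp mulmxBl mul1mx Pd subr0.
  by rewrite -[LHS]E dE mulmxDr !mulmxA PerpBt mul0mx addr0.
have SE : forall z, stability phi Z G theta0 z = ((phi z)^T *m v1) 0 0 * c 0 0.
  move=> z; rewrite /stability /model -/A -/B -/tA -/tB.
  have -> : forall U V : 'M[R]_1, U 0 0 - V 0 0 = (U - V) 0 0 by move=> U V; rewrite !mxE.
  by rewrite -mulmxBr dv mulmxA H11.
have nE : norm2 v1 ^+ 2 = (v1^T *m v1) 0 0.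
  by rewrite /norm2 sqr_sqrtr //; have := @sq_ge0 _ _ v1^T; rewrite trmxK.
have PperpT : Pperp^T = Pperp by rewrite /Pperp linearB /= trmx1 PT.
have PperpI : Pperp *m Pperp = Pperp.
  by rewrite /Pperp mulmxBl mul1mx mulmxBr mulmx1 PP subrr subr0.
have aE : a^T *m v1 = v1^T *m v1.
  by rewrite /v1 trmx_mul PperpT -mulmxA (mulmxA Pperp) PperpI.
have v1nz : v1 != 0.
  apply/eqP => H0.
  have aPa : a = P *m a.
    by apply/eqP; rewrite -subr_eq0 -{1}(mul1mx a) -mulmxBl; apply/eqP.
  have : row_mx 1%:M (- (a^T *m M)) *m col_mx a^T B = 0.
    by rewrite mul_row_col mul1mx mulNmx -mulmxA -PM -PT -trmx_mul -aPa subrr.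
  rewrite -AE => /(@H3 _ _ _ _ _ HK) E.
  have := congr1 (fun X : 'M_(1, 1 + n) => X 0 (lshift n 0)) E.
  by rewrite /= row_mxEl !mxE eqxx /= => /eqP; rewrite oner_eq0.
have nnz : norm2 v1 != 0.
  have q0' := @sq_ge0 _ _ v1^T; rewrite trmxK in q0'.
  rewrite /norm2 sqrtr_eq0 -ltNge lt_def q0' andbT.
  apply/eqP => q0; move/eqP: v1nz; apply.
  have := @sq_eq0 _ _ v1^T; rewrite trmxK => /(_ q0) E.
  by rewrite -[v1]trmxK E trmx0.
split => // z.
rewrite !SE -/a aE -nE mulrA divfK //.
exact: expf_neq0.
Qed.
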